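(* Let $(x_n,y_m)$ and $(\tilde x_n,\tilde y_m)$ be two pairs of slightly perturbed increasing arithmetic progressions, $x_n=\alpha n+\beta+o(1)$, $y_m=\gamma m+\delta+o(1)$, $\tilde x_n=\tilde\alpha n+\tilde\beta+o(1)$, $\tilde y_m=\tilde\gamma m+\tilde\delta+o(1)$, with irrational relative densities $\alpha/\gamma$ and $\tilde\alpha/\tilde\gamma$. If the two pairs are topologically equivalent at $+\infty$, then $\alpha/\gamma=\tilde\alpha/\tilde\gamma$, and $\frac{\beta-\delta}{\gamma}-\frac{\tilde\beta-\tilde\delta}{\tilde\gamma}$ lies in the additive subgroup of $\mathbb R$ generated by $1$ and $\alpha/\gamma$.
   Context: A slightly perturbed arithmetic progression is a sequence of the form $x_n=An+\tau+o(1)$, $n\to+\infty$. For a pair $(\alpha n+\beta+o(1),\ \gamma m+\delta+o(1))$ the relative density is $\alpha/\gamma$ and the normalized difference of free terms is $(\beta-\delta)/\gamma$. Two pairs of sequences on the line are topologically equivalent at $+\infty$ if there is a homeomorphism of the line defined in a neighborhood of $+\infty$ mapping the first sequence of the first pair to the first sequence of the second pair and the second to the second. *)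

(* Defs.v *)
From Stdlib Require Import Reals ZArith.
Open Scope R_scope.

Definition perturbed_AP (x : nat -> R) (A tau : R) : Prop :=
  Un_cv (fun n => x n - (A * INR n + tau)) 0.

Definition irrational (r : R) : Prop :=
  ~ exists p q : Z, q <> 0%Z /\ r = IZR p / IZR q.

Definition in_group_1_rho (rho r : R) : Prop :=
  exists p q : Z, r = IZR p + IZR q * rho.

Definition homeo_near_pinfty (h : R -> R) (a b : R) : Prop :=
  exists g : R -> R,
    (forall t, a < t -> b < h t) /\
    (forall s, b < s -> a < g s) /\
    (forall t, a < t -> g (h t) = t) /\
    (forall s, b < s -> h (g s) = s) /\
    (forall t, a < t -> continuity_pt h t) /\
    (forall s, b < s -> continuity_pt g s).

Definition top_equiv_pinfty (x y x' y' : nat -> R) : Prop :=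
  exists (h : R -> R) (a b : R), homeo_near_pinfty h a b /\
    (forall t, a < t ->
       ((exists n, x n = t) <-> (exists n, x' n = h t)) /\
       ((exists m, y m = t) <-> (exists m, y' m = h t))).

(* Main.v *)
Require Import Defs.
From Stdlib Require Import Reals ZArith Lra Lia Classical.
Open Scope R_scope.
Lemma php_rel : forall N (Rl : nat -> nat -> Prop),
  (forall i, (i <= N)%nat -> exists v, (v < N)%nat /\ Rl i v) ->
  exists i j v, (i < j <= N)%nat /\ Rl i v /\ Rl j v.
Proof.
  induction N as [|N IH]; intros Rl H.
  - destruct (H 0%nat (le_n 0)) as [v [Hv _]]. lia.
  - destruct (H (S N) (le_n _)) as [v0 [Hv0 R0]].
    destruct (classic (exists i, (i <= N)%nat /\ Rl i v0)) as [[i [Hi Ri]]|Hno].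
    + exists i, (S N), v0. repeat split; auto; lia.
    + set (R' := fun i w => exists v, Rl i v /\ (v < S N)%nat /\
                   w = if Nat.ltb v v0 then v else pred v).
      assert (H' : forall i, (i <= N)%nat -> exists w, (w < N)%nat /\ R' i w).
      { intros i Hi. destruct (H i ltac:(lia)) as [v [Hv Rv]].
        assert (v <> v0) by (intro; subst; apply Hno; eauto).
        exists (if Nat.ltb v v0 then v else pred v). split.
        - destruct (Nat.ltb_spec v v0); lia.
        - exists v; auto. }
      destruct (IH R' H') as [i [j [w [Hij [[v1 [R1 [B1 E1]]] [v2 [R2 [B2 E2]]]]]]]].
      assert (v1 <> v0) by (intro; subst; apply Hno; exists i; split; auto; lia).
      assert (v2 <> v0) by (intro; subst; apply Hno; exists j; split; auto; lia).
      assert (v1 = v2).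
      { destruct (Nat.ltb_spec v1 v0); destruct (Nat.ltb_spec v2 v0); lia. }
      subst. exists i, j, v2. repeat split; auto; lia.
Qed.
Lemma floor_ex : forall w, exists K : Z, IZR K <= w < IZR K + 1.
Proof. intro w. destruct (base_Int_part w). exists (Int_part w). lra. Qed.

Lemma INR_Z2N : forall F : Z, (0 <= F)%Z -> INR (Z.to_nat F) = IZR F.
Proof. intros F H. rewrite INR_IZR_INZ, Z2Nat.id; auto. Qed.

Lemma step_lem : forall z e A L, 0 < e < L -> z <= A ->
  exists t : nat, A < z + INR t * e < A + L.
Proof.
  intros z e A L He Hz.
  destruct (floor_ex ((A - z)/e)) as [F HF].
  assert (Hq : 0 <= (A - z)/e) by (unfold Rdiv; apply Rmult_le_pos; [lra| left; apply Rinv_0_lt_compat; lra]).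
  assert (HF0 : (0 <= F)%Z).
  { assert (IZR F > -1) by lra. apply lt_IZR in H. lia. }
  exists (S (Z.to_nat F)). rewrite S_INR, INR_Z2N by auto.
  assert (E : (A - z)/e * e = A - z) by (field; lra).
  set (Q := (A - z)/e) in *.
  assert (0 < (IZR F + 1 - Q) * e) by (apply Rmult_lt_0_compat; lra).
  assert (0 <= (Q - IZR F) * e) by (apply Rmult_le_pos; lra).
  split; nra.
Qed.

Lemma dirichlet : forall rho, irrational rho -> forall L, 0 < L ->
  exists (q : nat) (p : Z), (0 < q)%nat /\ 0 < Rabs (INR q * rho - IZR p) < L.
Proof.
  intros rho Hirr L HL.
  destruct (floor_ex (1/L)) as [N0 HN0].
  assert (HN0p : (0 <= N0)%Z).
  { assert (0 < 1/L) by (apply Rdiv_lt_0_compat; lra).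
    assert (IZR N0 > -1) by lra. apply lt_IZR in H0. lia. }
  set (N := S (Z.to_nat N0)).
  assert (HN : INR N > 1/L) by (unfold N; rewrite S_INR, INR_Z2N by auto; lra).
  assert (HNp : 0 < INR N) by (unfold N; apply lt_0_INR; lia).
  set (fl := fun i => Int_part (rho * INR i)).
  set (fr := fun i => rho * INR i - IZR (fl i)).
  assert (Hfr : forall i, 0 <= fr i < 1).
  { intro i. unfold fr, fl. destruct (base_Int_part (rho * INR i)). lra. }
  destruct (php_rel N (fun i v => INR v <= INR N * fr i < INR v + 1)) as
     [i [j [v [Hij [Hi Hj]]]]].
  { intros i _. destruct (floor_ex (INR N * fr i)) as [F HF].
    specialize (Hfr i).
    assert (0 <= INR N * fr i < INR N) by nra.
    assert (HF0 : (0 <= F)%Z).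
    { assert (IZR F > -1) by lra. apply lt_IZR in H0. lia. }
    exists (Z.to_nat F). rewrite INR_Z2N by auto. split; [|lra].
    apply INR_lt. rewrite INR_Z2N by auto. lra. }
  exists (j - i)%nat, (fl j - fl i)%Z. split; [lia|].
  rewrite minus_INR by lia. rewrite minus_IZR.
  assert (E : (INR j - INR i) * rho - (IZR (fl j) - IZR (fl i)) = fr j - fr i)
    by (unfold fr; ring).
  rewrite E. split.
  - apply Rabs_pos_lt. intro Hz. apply Hirr.
    exists (fl j - fl i)%Z, (Z.of_nat j - Z.of_nat i)%Z. split; [lia|].
    rewrite !minus_IZR, <- !INR_IZR_INZ.
    assert (INR i < INR j) by (apply lt_INR; lia).
    field_simplify_eq; [|lra]. unfold fr in Hz. lra.
  - assert (Habs : Rabs (INR N * fr j - INR N * fr i) < 1).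
    { apply Rabs_def1; lra. }
    rewrite <- Rmult_minus_distr_l, Rabs_mult, Rabs_right in Habs by lra.
    assert (1 / L * L = 1) by (field; lra).
    assert (Rabs (fr j - fr i) * INR N < L * INR N) by nra.
    nra.
Qed.

Lemma density : forall rho c A L (N0 : nat), irrational rho -> 0 < L ->
  exists (n : nat) (K : Z), (N0 <= n)%nat /\
    A < IZR K - rho * INR n - c < A + L.
Proof.
  intros rho c A L N0 Hirr HL.
  destruct (dirichlet rho Hirr L HL) as [q [p [Hq [Hs1 Hs2]]]].
  set (s := INR q * rho - IZR p) in *.
  set (w0 := - rho * INR N0 - c).
  assert (key : forall (K0 : Z) (t : nat),
    IZR (K0 + Z.of_nat t * p) - rho * INR (N0 + t * q) - c
    = (IZR K0 + w0) - INR t * s).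
  { intros K0 t. rewrite plus_IZR, mult_IZR, <- INR_IZR_INZ, plus_INR, mult_INR.
    unfold w0, s. ring. }
  destruct (Rle_or_lt 0 s) as [Hs|Hs].
  - assert (Hs' : 0 < s).
    { destruct Hs; auto. rewrite <- H, Rabs_R0 in Hs1. lra. }
    rewrite Rabs_right in Hs2 by lra.
    destruct (floor_ex (A + L - w0)) as [K1 HK1].
    destruct (step_lem (-(IZR (K1+1) + w0)) s (-(A+L)) L ltac:(lra)) as [t Ht].
    { rewrite plus_IZR. lra. }
    exists (N0 + t * q)%nat, (K1 + 1 + Z.of_nat t * p)%Z. split; [lia|].
    rewrite key. lra.
  - rewrite Rabs_left in Hs2 by lra.
    destruct (floor_ex (A - w0)) as [K1 HK1].
    destruct (step_lem (IZR K1 + w0) (-s) A L ltac:(lra)) as [t Ht].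
    { lra. }
    exists (N0 + t * q)%nat, (K1 + Z.of_nat t * p)%Z. split; [lia|].
    rewrite key. lra.
Qed.

Lemma nat_large : forall A B, 0 < A -> exists N : nat, forall n, (N <= n)%nat -> B < A * INR n.
Proof.
  intros A B HA. destruct (floor_ex (B / A)) as [F HF].
  exists (Z.to_nat (F + 1)). intros n Hn.
  apply le_INR in Hn.
  assert (HB : B = (B / A) * A) by (field; lra).
  assert (B / A < INR n).
  { destruct (Z_le_gt_dec 0 (F + 1)) as [H|H].
    - rewrite INR_Z2N in Hn by auto. rewrite plus_IZR in Hn. lra.
    - apply Z.gt_lt in H. apply IZR_lt in H. rewrite plus_IZR in H.
      pose proof (pos_INR n). lra. }
  rewrite HB. rewrite (Rmult_comm A). apply Rmult_lt_compat_r; lra.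
Qed.

Lemma ap_err : forall z A tau, perturbed_AP z A tau -> forall eps, 0 < eps ->
  exists N, forall n, (N <= n)%nat -> Rabs (z n - (A * INR n + tau)) < eps.
Proof.
  intros z A tau H eps He. destruct (H eps He) as [N HN]. exists N.
  intros n Hn. specialize (HN n Hn). unfold R_dist in HN.
  rewrite Rminus_0_r in HN. auto.
Qed.

Lemma ap_mono : forall z A tau, 0 < A -> perturbed_AP z A tau ->
  exists N, forall n n', (N <= n)%nat -> (n < n')%nat -> z n < z n'.
Proof.
  intros z A tau HA H. destruct (ap_err z A tau H (A/2) ltac:(lra)) as [N HN].
  exists N. intros n n' Hn Hn'.
  pose proof (HN n Hn) as H1. pose proof (HN n' ltac:(lia)) as H2.
  apply Rabs_def2 in H1. apply Rabs_def2 in H2.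
  assert (INR n + 1 <= INR n') by (rewrite <- S_INR; apply le_INR; lia).
  nra.
Qed.

Lemma ap_big : forall z A tau, 0 < A -> perturbed_AP z A tau ->
  forall B, exists N, forall n, (N <= n)%nat -> B < z n.
Proof.
  intros z A tau HA H B. destruct (ap_err z A tau H 1 ltac:(lra)) as [N1 HN1].
  destruct (nat_large A (B - tau + 1) HA) as [N2 HN2].
  exists (max N1 N2). intros n Hn.
  pose proof (HN1 n ltac:(lia)) as H1. pose proof (HN2 n ltac:(lia)) as H2.
  apply Rabs_def2 in H1. lra.
Qed.

Lemma fin_bound : forall (z : nat -> R) Q, exists B, forall q, (q < Q)%nat -> z q <= B.
Proof.
  intros z Q. induction Q as [|Q [B HB]].
  - exists 0. intros; lia.
  - exists (Rmax B (z Q)). intros q Hq.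
    destruct (Nat.eq_dec q Q) as [->|Hne].
    + apply Rmax_r.
    + eapply Rle_trans; [apply HB; lia| apply Rmax_l].
Qed.

Lemma ap_gap : forall z A tau, 0 < A -> perturbed_AP z A tau ->
  exists N1, forall n, (N1 <= n)%nat -> forall q, ~ (z n < z q < z (S n)).
Proof.
  intros z A tau HA H.
  destruct (ap_mono z A tau HA H) as [N HN].
  destruct (fin_bound z N) as [B HB].
  destruct (ap_big z A tau HA H B) as [N2 HN2].
  exists (max N N2). intros n Hn q [H1 H2].
  destruct (lt_dec q N) as [Hq|Hq].
  - specialize (HB q Hq). specialize (HN2 n ltac:(lia)). lra.
  - destruct (le_lt_dec q n) as [Hqn|Hqn].
    + destruct (Nat.eq_dec q n) as [->|Hne]; [lra|].
      specialize (HN q n ltac:(lia) ltac:(lia)). lra.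
    + destruct (Nat.eq_dec q (S n)) as [->|Hne]; [lra|].
      specialize (HN (S n) q ltac:(lia) ltac:(lia)). lra.
Qed.

Lemma ap_small : forall z A tau, 0 < A -> perturbed_AP z A tau ->
  forall T, exists Q, forall q, z q <= T -> (q < Q)%nat.
Proof.
  intros z A tau HA H T. destruct (ap_big z A tau HA H T) as [N HN].
  exists N. intros q Hq. destruct (lt_dec q N); auto.
  specialize (HN q ltac:(lia)). lra.
Qed.

Section HomeoSec.
Variables (h g : R -> R) (a b : R) (x x' : nat -> R) (alpha beta alpha' beta' : R).
Hypotheses (Halpha : 0 < alpha) (Halpha' : 0 < alpha')
  (Hx : perturbed_AP x alpha beta) (Hx' : perturbed_AP x' alpha' beta')
  (Hh : forall t, a < t -> b < h t) (Hg : forall s, b < s -> a < g s)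
  (Hgh : forall t, a < t -> g (h t) = t) (Hhg : forall s, b < s -> h (g s) = s)
  (Hc : forall t, a < t -> continuity_pt h t)
  (Hiff : forall t, a < t -> ((exists n, x n = t) <-> (exists n, x' n = h t))).

Lemma h_unbounded : forall t2, a < t2 -> forall B, exists t, t2 < t /\ B < h t.
Proof.
  intros t2 Ht2 B. apply NNPP. intro Hno.
  assert (Hle : forall t, t2 < t -> h t <= B).
  { intros t Ht. destruct (Rle_or_lt (h t) B); auto. exfalso; apply Hno; eauto. }
  destruct (ap_mono x' alpha' beta' Halpha' Hx') as [P1 HP1].
  destruct (ap_big x' alpha' beta' Halpha' Hx' (Rmax B b)) as [P3 HP3].
  destruct (ap_small x alpha beta Halpha Hx t2) as [Q HQ].
  set (P := max P1 P3).
  destruct (php_rel Q (fun i v => x v = g (x' (P + i)%nat))) as [i [j [v [Hij [Hi Hj]]]]].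
  - intros i _. set (s := x' (P + i)%nat).
    assert (Hs : Rmax B b < s) by (apply HP3; unfold P; lia).
    assert (HsB : B < s) by (pose proof (Rmax_l B b); lra).
    assert (Hsb : b < s) by (pose proof (Rmax_r B b); lra).
    assert (Ht : a < g s) by auto.
    destruct (proj2 (Hiff (g s) Ht)) as [v Hv].
    { exists (P + i)%nat. rewrite Hhg; auto. }
    exists v. split; auto. apply HQ. rewrite Hv.
    destruct (Rle_or_lt (g s) t2); auto.
    specialize (Hle (g s) H). rewrite Hhg in Hle; auto. lra.
  - assert (E : x' (P + i)%nat = x' (P + j)%nat).
    { assert (b < x' (P + i)%nat).
      { pose proof (HP3 (P+i)%nat ltac:(unfold P; lia)). pose proof (Rmax_r B b). lra. }
      assert (b < x' (P + j)%nat).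
      { pose proof (HP3 (P+j)%nat ltac:(unfold P; lia)). pose proof (Rmax_r B b). lra. }
      rewrite <- (Hhg (x' (P + i)%nat)), <- (Hhg (x' (P + j)%nat)) by auto.
      congruence. }
    specialize (HP1 (P + i)%nat (P + j)%nat ltac:(unfold P; lia) ltac:(lia)). lra.
Qed.

Lemma h_incr : forall t1 t2, a < t1 -> t1 < t2 -> h t1 < h t2.
Proof.
  intros t1 t2 H1 H12.
  destruct (Rtotal_order (h t1) (h t2)) as [Hl|[He|Hg']]; auto; exfalso.
  - assert (t1 = t2) by (rewrite <- (Hgh t1), <- (Hgh t2), He by lra; auto). lra.
  - destruct (h_unbounded t2 ltac:(lra) (h t1)) as [t3 [H23 H3]].
    destruct (Ranalysis5.IVT_interv (fun t => h t - h t1) t2 t3) as [z [Hz Hz0]].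
    + intros u Hu. apply (continuity_pt_minus h (fct_cte (h t1))).
      * apply Hc. lra.
      * apply continuity_pt_const. intros ? ?; reflexivity.
    + lra.
    + lra.
    + lra.
    + assert (z = t1).
      { rewrite <- (Hgh z), <- (Hgh t1) by lra. f_equal. lra. }
      lra.
Qed.

Lemma h_incr_rev : forall t1 t2, a < t1 -> a < t2 -> h t1 < h t2 -> t1 < t2.
Proof.
  intros t1 t2 H1 H2 H. destruct (Rtotal_order t1 t2) as [|[->|]]; auto; try lra.
  pose proof (h_incr t2 t1 H2 H0). lra.
Qed.

End HomeoSec.

Lemma shift_lem : forall (h g : R -> R) (a b : R) (z z' : nat -> R) (A tau A' tau' : R),
  0 < A -> 0 < A' -> perturbed_AP z A tau -> perturbed_AP z' A' tau' ->
  (forall t, a < t -> b < h t) -> (forall s, b < s -> a < g s) ->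
  (forall s, b < s -> h (g s) = s) ->
  (forall t1 t2, a < t1 -> t1 < t2 -> h t1 < h t2) ->
  (forall t2, a < t2 -> forall B, exists t, t2 < t /\ B < h t) ->
  (forall t, a < t -> ((exists n, z n = t) <-> (exists n, z' n = h t))) ->
  exists N2 P2 : nat, (forall i, a < z (N2 + i)%nat) /\
     forall i, h (z (N2 + i)%nat) = z' (P2 + i)%nat.
Proof.
  intros h g a b z z' A tau A' tau' HA HA' Hz Hz' Hh Hg Hhg Hinc Hunb Hiff.
  assert (Hrev : forall t1 t2, a < t1 -> a < t2 -> h t1 < h t2 -> t1 < t2).
  { intros t1 t2 H1 H2 H. destruct (Rtotal_order t1 t2) as [|[->|]]; auto; try lra.
    pose proof (Hinc t2 t1 H2 H0). lra. }
  destruct (ap_big z A tau HA Hz a) as [Na HNa].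
  destruct (ap_gap z A tau HA Hz) as [Ng HNg].
  destruct (ap_mono z A tau HA Hz) as [Nm HNm].
  destruct (ap_mono z' A' tau' HA' Hz') as [Pm HPm].
  destruct (fin_bound z' Pm) as [B' HB'].
  destruct (Hunb (a + 1) ltac:(lra) B') as [t [Ht HtB]].
  destruct (ap_big z A tau HA Hz t) as [Nt HNt].
  set (N1 := max (max Na Ng) (max Nm Nt)).
  assert (Hex : forall n, (N1 <= n)%nat -> exists p, z' p = h (z n)).
  { intros n Hn. apply (Hiff (z n)). apply HNa; unfold N1 in Hn; lia. eauto. }
  assert (Hbig : forall n p, (N1 <= n)%nat -> z' p = h (z n) -> (Pm <= p)%nat).
  { intros n p Hn Hp. destruct (lt_dec p Pm) as [Hl|]; [|lia].
    specialize (HB' p Hl). assert (h t < h (z n)).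
    { apply Hinc. lra. apply HNt. unfold N1 in Hn; lia. }
    lra. }
  assert (Hstep : forall n p p', (N1 <= n)%nat -> z' p = h (z n) ->
            z' p' = h (z (S n)) -> p' = S p).
  { intros n p p' Hn Hp Hp'.
    assert (Hza : a < z n) by (apply HNa; unfold N1 in Hn; lia).
    assert (Hzn : z n < z (S n)) by (apply HNm; unfold N1 in Hn; lia).
    assert (Hlt : z' p < z' p') by (rewrite Hp, Hp'; apply Hinc; auto).
    pose proof (Hbig n p Hn Hp) as Bp.
    pose proof (Hbig (S n) p' ltac:(lia) Hp') as Bp'.
    assert (p < p')%nat.
    { destruct (lt_dec p p'); auto. destruct (Nat.eq_dec p p'); [subst; lra|].
      pose proof (HPm p' p Bp' ltac:(lia)). lra. }
    destruct (Nat.eq_dec p' (S p)); auto. exfalso.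
    assert (H1 : z' p < z' (S p)) by (apply HPm; lia).
    assert (H2 : z' (S p) < z' p') by (apply HPm; lia).
    set (s := z' (S p)) in *.
    assert (Hsb : b < s) by (pose proof (Hh (z n) Hza); lra).
    assert (Hga : a < g s) by auto.
    destruct (proj2 (Hiff (g s) Hga)) as [q Hq].
    { exists (S p). rewrite Hhg; auto. }
    apply (HNg n ltac:(unfold N1 in Hn; lia) q). rewrite Hq. split.
    - apply Hrev; auto. rewrite Hhg; auto. lra.
    - apply Hrev; auto. lra. rewrite Hhg; auto. lra. }
  destruct (Hex N1 (le_n _)) as [p0 Hp0].
  exists N1, p0. split.
  - intro i. apply HNa. unfold N1; lia.
  - intro i. induction i as [|i IH].
    + rewrite !Nat.add_0_r. auto.
    + destruct (Hex (S (N1 + i)) ltac:(lia)) as [p' Hp'].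
      rewrite (Hstep (N1 + i)%nat (p0 + i)%nat p') in Hp' by (auto; lia).
      replace (N1 + S i)%nat with (S (N1 + i)) by lia.
      replace (p0 + S i)%nat with (S (p0 + i)) by lia. auto.
Qed.

Lemma Z_to_idx : forall (K : Z) (M N : nat), IZR K > INR M + INR N - 1 ->
  exists j, (N <= j)%nat /\ INR (M + j) = IZR K.
Proof.
  intros K M N H. rewrite !INR_IZR_INZ, <- plus_IZR in H.
  rewrite <- minus_IZR in H. apply Rgt_lt, lt_IZR in H.
  exists (Z.to_nat K - M)%nat. split; [lia|].
  rewrite INR_IZR_INZ. f_equal. lia.
Qed.

Theorem lemma7 (x y x' y' : nat -> R)
  (alpha beta gamma delta alpha' beta' gamma' delta' : R) :
  0 < alpha -> 0 < gamma -> 0 < alpha' -> 0 < gamma' ->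
  perturbed_AP x alpha beta -> perturbed_AP y gamma delta ->
  perturbed_AP x' alpha' beta' -> perturbed_AP y' gamma' delta' ->
  irrational (alpha / gamma) -> irrational (alpha' / gamma') ->
  top_equiv_pinfty x y x' y' ->
  alpha / gamma = alpha' / gamma' /\
  in_group_1_rho (alpha / gamma)
    ((beta - delta) / gamma - (beta' - delta') / gamma').
Proof.
  intros Ha Hgm Ha' Hgm' Hx Hy Hx' Hy' Hirr _ [h [a [b [[g [Hh [Hg [Hgh [Hhg [Hc _]]]]]] Hsets]]]].
  pose proof (fun t Ht => proj1 (Hsets t Ht)) as Hix.
  pose proof (fun t Ht => proj2 (Hsets t Ht)) as Hiy.
  pose proof (h_incr h g a b x x' alpha beta alpha' beta' Ha Ha' Hx Hx' Hg Hgh Hhg Hc Hix) as Hinc.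
  pose proof (h_unbounded h g a b x x' alpha beta alpha' beta' Ha Ha' Hx Hx' Hg Hhg Hix) as Hunb.
  destruct (shift_lem h g a b x x' alpha beta alpha' beta' Ha Ha' Hx Hx' Hh Hg Hhg Hinc Hunb Hix)
    as [N2 [P2 [HxA HxS]]].
  destruct (shift_lem h g a b y y' gamma delta gamma' delta' Hgm Hgm' Hy Hy' Hh Hg Hhg Hinc Hunb Hiy)
    as [M2 [Q2 [HyA HyS]]].
  set (rho := alpha / gamma) in *.
  set (rho' := alpha' / gamma').
  set (c := (beta - delta) / gamma).
  set (c' := (beta' - delta') / gamma').
  set (K0 := INR Q2 - INR M2 - rho' * INR P2 + rho * INR N2 - c' + c).
  assert (Core : forall eta, 0 < eta -> exists N, forall i j, (N <= i)%nat -> (N <= j)%nat ->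
     let U := INR (M2 + j) - rho * INR (N2 + i) - c in
     (U < - eta -> U + K0 + (rho - rho') * INR i < eta) /\
     (U > eta -> U + K0 + (rho - rho') * INR i > - eta)).
  { intros eta Heta.
    set (eps := Rmin (gamma * eta) (gamma' * eta) / 2).
    assert (He1 : eps <= gamma * eta / 2) by (unfold eps; pose proof (Rmin_l (gamma*eta) (gamma'*eta)); lra).
    assert (He2 : eps <= gamma' * eta / 2) by (unfold eps; pose proof (Rmin_r (gamma*eta) (gamma'*eta)); lra).
    assert (He : 0 < eps).
    { unfold eps. apply Rmin_case; apply Rmult_lt_0_compat; try lra; apply Rmult_lt_0_compat; lra. }
    destruct (ap_err x alpha beta Hx eps He) as [Nx HNx].
    destruct (ap_err y gamma delta Hy eps He) as [Ny HNy].
    destruct (ap_err x' alpha' beta' Hx' eps He) as [Nx' HNx'].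
    destruct (ap_err y' gamma' delta' Hy' eps He) as [Ny' HNy'].
    exists (max (max Nx Ny) (max Nx' Ny')). intros i j Hi Hj U.
    pose proof (Rabs_def2 _ _ (HNx (N2 + i)%nat ltac:(lia))) as E1.
    pose proof (Rabs_def2 _ _ (HNy (M2 + j)%nat ltac:(lia))) as E2.
    pose proof (Rabs_def2 _ _ (HNx' (P2 + i)%nat ltac:(lia))) as E3.
    pose proof (Rabs_def2 _ _ (HNy' (Q2 + j)%nat ltac:(lia))) as E4.
    set (V := U + K0 + (rho - rho') * INR i).
    assert (EU : gamma * U = gamma * INR (M2 + j) + delta - (alpha * INR (N2 + i) + beta)).
    { unfold U, rho, c. field. lra. }
    assert (EV : gamma' * V = gamma' * INR (Q2 + j) + delta' - (alpha' * INR (P2 + i) + beta')).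
    { unfold V, U, K0, rho, rho', c, c'. rewrite !plus_INR. field. lra. }
    rewrite <- (HxS i) in E3. rewrite <- (HyS j) in E4.
    split; intro HU.
    - assert (gamma * U < gamma * (- eta)) by (apply Rmult_lt_compat_l; lra).
      assert (Hl : y (M2 + j)%nat < x (N2 + i)%nat) by lra.
      apply (Hinc _ _ (HyA j)) in Hl.
      assert (gamma' * V < gamma' * eta) by lra.
      apply Rmult_lt_reg_l in H0; lra.
    - assert (gamma * eta < gamma * U) by (apply Rmult_lt_compat_l; lra).
      assert (Hl : x (N2 + i)%nat < y (M2 + j)%nat) by lra.
      apply (Hinc _ _ (HxA i)) in Hl.
      assert (gamma' * (- eta) < gamma' * V) by lra.
      apply Rmult_lt_reg_l in H0; lra. }
  assert (Hrho : 0 < rho) by (unfold rho; apply Rdiv_lt_0_compat; lra).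
  assert (Erho : rho = rho').
  { destruct (Rtotal_order rho rho') as [Hlt|[Heq|Hgt]]; auto; exfalso.
    - destruct (Core (1/2) ltac:(lra)) as [N HN].
      destruct (nat_large (rho' - rho) (3 + K0) ltac:(lra)) as [I1 HI1].
      destruct (nat_large rho (INR M2 + INR N - rho * INR N2 - c + 2) Hrho) as [I2 HI2].
      set (i := max N (max I1 I2)).
      specialize (HI1 i ltac:(unfold i; lia)). specialize (HI2 i ltac:(unfold i; lia)).
      set (w := rho * INR (N2 + i) + c).
      destruct (floor_ex w) as [F HF].
      assert (Hw : w = rho * INR N2 + rho * INR i + c) by (unfold w; rewrite plus_INR; ring).
      destruct (Z_to_idx (F + 2) M2 N) as [j [Hj Ej]].
      { rewrite plus_IZR. lra. }
      destruct (HN i j ltac:(unfold i; lia) Hj) as [_ H2].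
      rewrite Ej in H2. rewrite plus_IZR in H2. 
      assert (IZR F + 2 - rho * INR (N2 + i) - c > 1/2) by (unfold w in *; lra).
      specialize (H2 H). unfold w in *; lra.
    - destruct (Core (1/2) ltac:(lra)) as [N HN].
      destruct (nat_large (rho - rho') (3 - K0) ltac:(lra)) as [I1 HI1].
      destruct (nat_large rho (INR M2 + INR N - rho * INR N2 - c + 2) Hrho) as [I2 HI2].
      set (i := max N (max I1 I2)).
      specialize (HI1 i ltac:(unfold i; lia)). specialize (HI2 i ltac:(unfold i; lia)).
      set (w := rho * INR (N2 + i) + c).
      destruct (floor_ex w) as [F HF].
      assert (Hw : w = rho * INR N2 + rho * INR i + c) by (unfold w; rewrite plus_INR; ring).
      destruct (Z_to_idx (F - 1) M2 N) as [j [Hj Ej]].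
      { rewrite minus_IZR. lra. }
      destruct (HN i j ltac:(unfold i; lia) Hj) as [H1 _].
      rewrite Ej in H1. rewrite minus_IZR in H1. 
      assert (IZR F - 1 - rho * INR (N2 + i) - c < - (1/2)) by (unfold w in *; lra).
      specialize (H1 H). unfold w in *; lra. }
  split; [exact Erho|].
  assert (Hd : K0 = 0).
  { destruct (Rtotal_order K0 0) as [Hlt|[Heq|Hgt]]; auto; exfalso;
      rewrite <- Erho in Core; rewrite Rminus_diag in Core.
    - set (eta := - K0 / 4).
      destruct (Core eta ltac:(unfold eta; lra)) as [N HN].
      destruct (nat_large rho (INR M2 + INR N - c + 1) Hrho) as [I2 HI2].
      destruct (density rho c eta (2 * eta) (N2 + N + I2) Hirr ltac:(unfold eta; lra))
        as [n [K [Hn HK]]].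
      specialize (HI2 n ltac:(lia)).
      destruct (Z_to_idx K M2 N) as [j [Hj Ej]].
      { unfold eta in HK. lra. }
      destruct (HN (n - N2)%nat j ltac:(lia) Hj) as [_ H2].
      replace (N2 + (n - N2))%nat with n in H2 by lia.
      rewrite Ej, Rmult_0_l, Rplus_0_r in H2.
      assert (IZR K - rho * INR n - c > eta) by lra.
      specialize (H2 H). unfold eta in *. lra.
    - set (eta := K0 / 4).
      destruct (Core eta ltac:(unfold eta; lra)) as [N HN].
      destruct (nat_large rho (INR M2 + INR N - c + 3 * eta + 1) Hrho) as [I2 HI2].
      destruct (density rho c (- 3 * eta) (2 * eta) (N2 + N + I2) Hirr ltac:(unfold eta; lra))
        as [n [K [Hn HK]]].
      specialize (HI2 n ltac:(lia)).
      destruct (Z_to_idx K M2 N) as [j [Hj Ej]].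
      { lra. }
      destruct (HN (n - N2)%nat j ltac:(lia) Hj) as [H1 _].
      replace (N2 + (n - N2))%nat with n in H1 by lia.
      rewrite Ej, Rmult_0_l, Rplus_0_r in H1.
      assert (IZR K - rho * INR n - c < - eta) by lra.
      specialize (H1 H). unfold eta in *. lra. }
  exists (Z.of_nat M2 - Z.of_nat Q2)%Z, (Z.of_nat P2 - Z.of_nat N2)%Z.
  rewrite !minus_IZR, <- !INR_IZR_INZ. fold c c'.
  unfold K0 in Hd. rewrite <- Erho in Hd. lra.
Qed.
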